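(* Let $\vec s=(s_1,\dots,s_k)\in\mathbb{Z}_+^k$ and let $\pi_1,\pi_2,\pi_3$ be three $\vec s$-multipermutations. Then there is a pair $i<j$ such that \[ \mathrm{LCS}(\pi_i,\pi_j)\geq\Bigl(\tfrac16\sum_{l=1}^k s_l^2\Bigr)^{1/3}. \] Equivalently, $\mathrm{LCS}_2(3,\mathcal P_{\vec s})\geq\bigl(\tfrac16\sum_{l} s_l^2\bigr)^{1/3}$.
   Context: For $\vec s\in\mathbb{Z}_+^k$, an $\vec s$-multipermutation is a word over $\{1,\dots,k\}$ in which each letter $l$ appears exactly $s_l$ times; $\mathcal P_{\vec s}$ is the set of all of them. $\mathrm{LCS}(w,w')$ is the length of a longest common subsequence of words $w,w'$. $\mathrm{LCS}_2(t,\mathcal P_{\vec s})$ is the minimum, over all sets of $t$ distinct elements of $\mathcal P_{\vec s}$, of the maximum $\mathrm{LCS}$ of two distinct members of the set. *)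

(* Defs.v *)
From mathcomp Require Import all_boot.
Set Implicit Arguments. Unset Strict Implicit. Unset Printing Implicit Defensive.

(* Words over the alphabet {1,...,k}, encoded as 'I_k (letter l+1 <-> ordinal l). *)

Definition is_multiperm (k : nat) (s : 'I_k -> nat) (w : seq 'I_k) : bool :=
  [forall l : 'I_k, count_mem l w == s l].

(* LCS w w' : the length of a longest common subsequence of w and w'.
   Subsequences of w are exactly the masks [mask m w]. *)
Definition LCS (T : eqType) (w w' : seq T) : nat :=
  \max_(m : (size w).-tuple bool | subseq (mask m w) w') size (mask m w).

(* Main.v *)
Require Import Defs.
From mathcomp Require Import all_boot.
From mathcomp Require Import zify.
Set Implicit Arguments. Unset Strict Implicit. Unset Printing Implicit Defensive.



Lemma LCS_ge (T : eqType) (c w w' : seq T) : subseq c w -> subseq c w' -> size c <= LCS w w'.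
Proof.
move=> /subseqP [m Hm ->] H'.
have Hm' : size m == size w by apply/eqP.
rewrite /LCS.
exact: (@leq_bigmax_cond _ (fun m0 : (size w).-tuple bool => subseq (mask m0 w) w')
   (fun m0 : (size w).-tuple bool => size (mask m0 w)) (Tuple Hm')).
Qed.

Lemma LCS_wit (T : eqType) (w w' : seq T) : exists c, [/\ subseq c w, subseq c w' & size c = LCS w w'].
Proof.
rewrite /LCS.
set P := (fun m0 : (size w).-tuple bool => subseq (mask m0 w) w').
have Hs : size (nseq (size w) false) == size w by rewrite size_nseq.
have P0 : P (Tuple Hs) by rewrite /P /= mask_false sub0seq.
have HP : 0 < #|P| by apply/card_gt0P; exists (Tuple Hs).
have [i0 Pi0 ->] := @eq_bigmax_cond _ P (fun m0 : (size w).-tuple bool => size (mask m0 w)) HP.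
by exists (mask i0 w); split => //; apply: mask_subseq.
Qed.



Lemma take_sub_take (T : eqType) (w : seq T) a a' : a <= a' -> subseq (take a w) (take a' w).
Proof. by move=> H; rewrite -(take_takel w H) take_subseq. Qed.

Lemma LCS_take (T : eqType) (u v : seq T) a b : LCS (take a u) (take b v) <= LCS u v.
Proof.
have [c [H1 H2 <-]] := LCS_wit (take a u) (take b v).
by apply: LCS_ge; [apply: subseq_trans H1 (take_subseq _ _)|apply: subseq_trans H2 (take_subseq _ _)].
Qed.

Lemma LCS_step (T : eqType) (x0 : T) (u v : seq T) a b a' b' :
  a < size u -> b < size v -> nth x0 u a = nth x0 v b -> a < a' -> b < b' ->
  LCS (take a u) (take b v) < LCS (take a' u) (take b' v).
Proof.
move=> Ha Hb Heq Ha' Hb'.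
have [c [H1 H2 <-]] := LCS_wit (take a u) (take b v).
have -> : (size c).+1 = size (rcons c (nth x0 u a)) by rewrite size_rcons.
apply: LCS_ge.
  apply: subseq_trans (take_sub_take u Ha'); rewrite (take_nth x0 Ha) -!cats1.
  by apply: cat_subseq => //; rewrite subseq_refl.
apply: subseq_trans (take_sub_take v Hb'); rewrite (take_nth x0 Hb) -!cats1 Heq.
by apply: cat_subseq => //; rewrite subseq_refl.
Qed.

Lemma LCS_lt (T : eqType) (x0 : T) (u v : seq T) a b :
  a < size u -> b < size v -> nth x0 u a = nth x0 v b ->
  LCS (take a u) (take b v) < LCS u v.
Proof.
move=> Ha Hb Heq.
by have := LCS_step Ha Hb Heq Ha Hb; rewrite !take_size.
Qed.

Definition rk (T : eqType) (l : T) (w : seq T) (a : nat) := count_mem l (take a w).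

Lemma rk_mono (T : eqType) (l : T) w a a' : a <= a' -> rk l w a <= rk l w a'.
Proof.
move=> H; rewrite /rk -(subnKC H) takeD count_cat; exact: leq_addr.
Qed.

Lemma rk_S (T : eqType) (l : T) w a : a < size w -> nth l w a = l -> rk l w a.+1 = (rk l w a).+1.
Proof. by move=> Ha Hn; rewrite /rk (take_nth l Ha) -cats1 count_cat Hn /= eqxx addn1. Qed.

Lemma rk_lt (T : eqType) (l : T) w a a' : a < size w -> a' < size w -> nth l w a = l -> nth l w a' = l ->
  (rk l w a < rk l w a') = (a < a').
Proof.
move=> Ha Ha' Hn Hn'; case: (ltnP a a') => H.
  by rewrite -(rk_S Ha Hn) rk_mono.
by apply/negbTE; rewrite -leqNgt rk_mono.
Qed.

Lemma rk_bound (T : eqType) (l : T) w a : a < size w -> nth l w a = l -> rk l w a < count_mem l w.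
Proof.
move=> Ha Hn; rewrite -(rk_S Ha Hn).
have -> : count_mem l w = rk l w (size w) by rewrite /rk take_size.
exact: rk_mono.
Qed.


Lemma card_pos (T : eqType) (l : T) (w : seq T) :
  #|[set a : 'I_(size w) | nth l w a == l]| = count_mem l w.
Proof.
have -> : count_mem l w = count (fun i => nth l w i == l) (iota 0 (size w)).
  by rewrite -{1}(mkseq_nth l w) /mkseq count_map.
rewrite cardsE cardE size_filter -val_enum_ord count_map enumT.
by apply: eq_count => i.
Qed.

Lemma antichain (T : finType) (A : {set T}) (u v : T -> nat) (s : nat) :
  (forall t, t \in A -> u t < s) -> (forall t, t \in A -> v t < s) ->
  {in A &, forall t t', u t = u t' -> v t = v t' -> t = t'} ->
  {in A &, forall t t', u t < u t' -> v t < v t' -> False} ->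
  #|A| <= s + s.
Proof.
move=> Hu Hv Hi Hn.
case: (posnP (s + s)) => [Hs|Hs].
  case: (set_0Vmem A) => [-> | [t Ht]]; first by rewrite cards0.
  by have := Hu t Ht; lia.
pose g t := Ordinal (ltn_pmod (u t + (s - v t)) Hs).
have Hg : {in A &, injective g}.
  move=> t t' Ht Ht' /(congr1 val) /=.
  have := Hu t Ht; have := Hu t' Ht'; have := Hv t Ht; have := Hv t' Ht'.
  move=> h1 h2 h3 h4.
  rewrite !modn_small; try lia.
  move=> E.
  case: (ltngtP (u t) (u t')) => H.
  - by exfalso; apply: (Hn t t') => //; lia.
  - by exfalso; apply: (Hn t' t) => //; lia.
  - by apply: Hi => //; lia.
rewrite -(card_in_imset Hg).
by apply: leq_trans (max_card _) _; rewrite card_ord.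
Qed.


Lemma sep_core (T : eqType) (l l' : T) (u v : seq T) a b a' b' L :
  a' < size u -> b' < size v -> nth l u a = l -> nth l v b = l ->
  nth l' u a' = nth l' v b' -> a < a' -> b < b' -> LCS u v <= L ->
  LCS (take a u) (take b v) %% L = LCS (take a' u) (take b' v) %% L -> False.
Proof.
move=> Ha' Hb' Hn Hm Hn' Haa Hbb HL.
have Ha : a < size u by lia.
have Hb : b < size v by lia.
have H1 := LCS_step Ha Hb (etrans Hn (esym Hm)) Haa Hbb.
have H2 := LCS_lt Ha' Hb' Hn'.
rewrite !modn_small; lia.
Qed.

Definition Trip k (u v x : seq 'I_k) := ('I_(size u) * 'I_(size v) * 'I_(size x))%type.

Definition Tset k (u v x : seq 'I_k) (l : 'I_k) : {set Trip u v x} :=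
  [set t : Trip u v x | (nth l u t.1.1 == l) && (nth l v t.1.2 == l) && (nth l x t.2 == l)].

Definition om L (HL : 0 < L) (n : nat) : 'I_L := Ordinal (ltn_pmod n HL).

Definition Dd (T : eqType) (u v : seq T) (a b : nat) := LCS (take a u) (take b v).

Definition lab k (u v x : seq 'I_k) L (HL : 0 < L) (t : Trip u v x) : 'I_L * 'I_L * 'I_L :=
  (om HL (Dd u v t.1.1 t.1.2), om HL (Dd u x t.1.1 t.2), om HL (Dd v x t.1.2 t.2)).

Lemma inT k (u v x : seq 'I_k) l (t : Trip u v x) : t \in Tset u v x l ->
  [/\ nth l u t.1.1 = l, nth l v t.1.2 = l & nth l x t.2 = l].
Proof. by rewrite inE => /andP [/andP [/eqP -> /eqP ->] /eqP ->]. Qed.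


Lemma alldiff k (u v x : seq 'I_k) L (HL : 0 < L) (H01 : LCS u v <= L) (H02 : LCS u x <= L)
  (H12 : LCS v x <= L) l l' (t t' : Trip u v x) :
  t \in Tset u v x l -> t' \in Tset u v x l' -> lab HL t = lab HL t' ->
  (t.1.1 : nat) <> t'.1.1 -> (t.1.2 : nat) <> t'.1.2 -> (t.2 : nat) <> t'.2 -> False.
Proof.
move=> /inT [h1 h2 h3] /inT [h1' h2' h3'] E.
move: (E); rewrite /lab => -[E1 E2 E3].
idtac.
have s01 : ~ (t.1.1 < t'.1.1 /\ t.1.2 < t'.1.2).
  by move=> [p q]; apply: (sep_core (l':=l') _ _ h1 h2 _ p q H01 E1) => //; rewrite h1' h2'.
have s01' : ~ (t'.1.1 < t.1.1 /\ t'.1.2 < t.1.2).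
  by move=> [p q]; apply: (sep_core (l':=l) _ _ h1' h2' _ p q H01 (esym E1)) => //; rewrite h1 h2.
have s02 : ~ (t.1.1 < t'.1.1 /\ t.2 < t'.2).
  by move=> [p q]; apply: (sep_core (l':=l') _ _ h1 h3 _ p q H02 E2) => //; rewrite h1' h3'.
have s02' : ~ (t'.1.1 < t.1.1 /\ t'.2 < t.2).
  by move=> [p q]; apply: (sep_core (l':=l) _ _ h1' h3' _ p q H02 (esym E2)) => //; rewrite h1 h3.
have s12 : ~ (t.1.2 < t'.1.2 /\ t.2 < t'.2).
  by move=> [p q]; apply: (sep_core (l':=l') _ _ h2 h3 _ p q H12 E3) => //; rewrite h2' h3'.
have s12' : ~ (t'.1.2 < t.1.2 /\ t'.2 < t.2).
  by move=> [p q]; apply: (sep_core (l':=l) _ _ h2' h3' _ p q H12 (esym E3)) => //; rewrite h2 h3.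
move=> d1 d2 d3.
lia.
Qed.


Lemma rk_inj (T : eqType) (l : T) w a a' : a < size w -> a' < size w -> nth l w a = l -> nth l w a' = l ->
  rk l w a = rk l w a' -> a = a'.
Proof.
move=> Ha Ha' Hn Hn' E.
have h1 := rk_lt Ha Ha' Hn Hn'. have h2 := rk_lt Ha' Ha Hn' Hn.
rewrite E ltnn in h1 h2.
move: h1 h2; case: (ltngtP a a') => //.
Qed.

Lemma card_setU3 (T : finType) (A B C : {set T}) : #|A :|: B :|: C| <= #|A| + #|B| + #|C|.
Proof.
apply: leq_trans (_ : #|A :|: B| + #|C| <= _); first by rewrite cardsU leq_subr.
by rewrite leq_add2r cardsU leq_subr.
Qed.

Lemma lab_eq k (u v x : seq 'I_k) L (HL : 0 < L) (t t' : Trip u v x) :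
  lab HL t = lab HL t' ->
  [/\ Dd u v t.1.1 t.1.2 %% L = Dd u v t'.1.1 t'.1.2 %% L,
      Dd u x t.1.1 t.2 %% L = Dd u x t'.1.1 t'.2 %% L &
      Dd v x t.1.2 t.2 %% L = Dd v x t'.1.2 t'.2 %% L].
Proof. by case. Qed.

Lemma fiber k (u v x : seq 'I_k) L (HL : 0 < L) (H01 : LCS u v <= L) (H02 : LCS u x <= L)
  (H12 : LCS v x <= L) l s (Hu : count_mem l u = s) (Hv : count_mem l v = s) (Hx : count_mem l x = s)
  (v0 : 'I_L * 'I_L * 'I_L) :
  #|[set t in Tset u v x l | lab HL t == v0]| <= 6 * s.
Proof.
set B := [set t in Tset u v x l | lab HL t == v0].
have HB : forall t, t \in B -> t \in Tset u v x l /\ lab HL t = v0.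
  by move=> t; rewrite inE => /andP [? /eqP].
case: (set_0Vmem B) => [-> | [p0 Hp0]]; first by rewrite cards0.
have [Tp0 Lp0] := HB p0 Hp0.
pose B1 := B :&: [set t | t.1.1 == p0.1.1].
pose B2 := B :&: [set t | t.1.2 == p0.1.2].
pose B3 := B :&: [set t | t.2 == p0.2].
have sub : B \subset B1 :|: B2 :|: B3.
  apply/subsetP => t Ht; have [Tt Lt] := HB t Ht.
  rewrite !in_setU !in_setI Ht /= !inE.
  case: (eqVneq t.1.1 p0.1.1) => //= d1.
  case: (eqVneq t.1.2 p0.1.2) => //= d2.
  case: (eqVneq t.2 p0.2) => //= d3.
  exfalso; apply: (alldiff H01 H02 H12 Tt Tp0 (etrans Lt (esym Lp0))).
  - by move=> e; move/eqP: d1; apply; exact: val_inj.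
  - by move=> e; move/eqP: d2; apply; exact: val_inj.
  - by move=> e; move/eqP: d3; apply; exact: val_inj.
apply: leq_trans (subset_leq_card sub) _.
apply: leq_trans (card_setU3 _ _ _) _.
have sep : forall t t', t \in B -> t' \in B -> lab HL t = lab HL t'.
  by move=> t t' /HB [_ ->] /HB [_ ->].
have b1 : #|B1| <= s + s.
  apply: (@antichain _ B1 (fun t => rk l v t.1.2) (fun t => rk l x t.2) s).
  - move=> t /setIP [/HB [/inT [_ h _] _] _]; rewrite -Hv; exact: rk_bound.
  - move=> t /setIP [/HB [/inT [_ _ h] _] _]; rewrite -Hx; exact: rk_bound.
  - move=> [[a b] c] [[a' b'] c'] /setIP [/HB [/inT [h1 h2 h3] _]]; rewrite inE /= => /eqP e1
      /setIP [/HB [/inT [h1' h2' h3'] _]]; rewrite inE /= => /eqP e1' E1 E2.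
    have eb := rk_inj (ltn_ord b) (ltn_ord b') h2 h2' E1.
    have ec := rk_inj (ltn_ord c) (ltn_ord c') h3 h3' E2.
    by rewrite e1 e1' (val_inj eb) (val_inj ec).
  - move=> t t' /setIP [/HB [/inT [h1 h2 h3] Lt] _] /setIP [/HB [/inT [h1' h2' h3'] Lt'] _] r1 r2.
    rewrite rk_lt // in r1; rewrite rk_lt // in r2.
    have [E1 E2 E3] := lab_eq (etrans Lt (esym Lt')).
    apply: (sep_core (l:=l) (l':=l) _ _ _ _ _ r1 r2 H12 E3) => //.
    by rewrite ?h1' ?h2' ?h3'.
have b2 : #|B2| <= s + s.
  apply: (@antichain _ B2 (fun t => rk l u t.1.1) (fun t => rk l x t.2) s).
  - move=> t /setIP [/HB [/inT [h _ _] _] _]; rewrite -Hu; exact: rk_bound.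
  - move=> t /setIP [/HB [/inT [_ _ h] _] _]; rewrite -Hx; exact: rk_bound.
  - move=> [[a b] c] [[a' b'] c'] /setIP [/HB [/inT [h1 h2 h3] _]]; rewrite inE /= => /eqP e1
      /setIP [/HB [/inT [h1' h2' h3'] _]]; rewrite inE /= => /eqP e1' E1 E2.
    have ea := rk_inj (ltn_ord a) (ltn_ord a') h1 h1' E1.
    have ec := rk_inj (ltn_ord c) (ltn_ord c') h3 h3' E2.
    by rewrite e1 e1' (val_inj ea) (val_inj ec).
  - move=> t t' /setIP [/HB [/inT [h1 h2 h3] Lt] _] /setIP [/HB [/inT [h1' h2' h3'] Lt'] _] r1 r2.
    rewrite rk_lt // in r1; rewrite rk_lt // in r2.
    have [E1 E2 E3] := lab_eq (etrans Lt (esym Lt')).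
    apply: (sep_core (l:=l) (l':=l) _ _ _ _ _ r1 r2 H02 E2) => //.
    by rewrite ?h1' ?h2' ?h3'.
have b3 : #|B3| <= s + s.
  apply: (@antichain _ B3 (fun t => rk l u t.1.1) (fun t => rk l v t.1.2) s).
  - move=> t /setIP [/HB [/inT [h _ _] _] _]; rewrite -Hu; exact: rk_bound.
  - move=> t /setIP [/HB [/inT [_ h _] _] _]; rewrite -Hv; exact: rk_bound.
  - move=> [[a b] c] [[a' b'] c'] /setIP [/HB [/inT [h1 h2 h3] _]]; rewrite inE /= => /eqP e1
      /setIP [/HB [/inT [h1' h2' h3'] _]]; rewrite inE /= => /eqP e1' E1 E2.
    have ea := rk_inj (ltn_ord a) (ltn_ord a') h1 h1' E1.
    have eb := rk_inj (ltn_ord b) (ltn_ord b') h2 h2' E2.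
    by rewrite e1 e1' (val_inj ea) (val_inj eb).
  - move=> t t' /setIP [/HB [/inT [h1 h2 h3] Lt] _] /setIP [/HB [/inT [h1' h2' h3'] Lt'] _] r1 r2.
    rewrite rk_lt // in r1; rewrite rk_lt // in r2.
    have [E1 E2 E3] := lab_eq (etrans Lt (esym Lt')).
    apply: (sep_core (l:=l) (l':=l) _ _ _ _ _ r1 r2 H01 E1) => //.
    by rewrite ?h1' ?h2' ?h3'.
lia.
Qed.


Lemma cross k (u v x : seq 'I_k) L (HL : 0 < L) (H01 : LCS u v <= L) (H02 : LCS u x <= L)
  (H12 : LCS v x <= L) l l' (t t' : Trip u v x) :
  t \in Tset u v x l -> t' \in Tset u v x l' -> lab HL t = lab HL t' -> l = l'.
Proof.
move=> Ht Ht' E.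
have [h1 h2 h3] := inT Ht; have [h1' h2' h3'] := inT Ht'.
case: (eqVneq l l') => // ne; exfalso.
apply: (alldiff H01 H02 H12 Ht Ht' E) => e.
- by move: ne; rewrite -h1 -h1' e (set_nth_default l l' (ltn_ord _)) eqxx.
- by move: ne; rewrite -h2 -h2' e (set_nth_default l l' (ltn_ord _)) eqxx.
- by move: ne; rewrite -h3 -h3' e (set_nth_default l l' (ltn_ord _)) eqxx.
Qed.

Lemma card_T k (u v x : seq 'I_k) l :
  #|Tset u v x l| = count_mem l u * count_mem l v * count_mem l x.
Proof.
have -> : Tset u v x l = setX (setX [set a : 'I_(size u) | nth l u a == l]
   [set a : 'I_(size v) | nth l v a == l]) [set a : 'I_(size x) | nth l x a == l].
  by apply/setP => -[[a b] c]; rewrite !inE.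
by rewrite !cardsX !card_pos.
Qed.

Lemma per_letter k (u v x : seq 'I_k) L (HL : 0 < L) (H01 : LCS u v <= L) (H02 : LCS u x <= L)
  (H12 : LCS v x <= L) l s (Hs : 0 < s) (Hu : count_mem l u = s) (Hv : count_mem l v = s)
  (Hx : count_mem l x = s) :
  s ^ 2 <= 6 * #|lab HL @: Tset u v x l|.
Proof.
have E : #|Tset u v x l| = s ^ 2 * s by by rewrite card_T Hu Hv Hx expnS expn1.
have : #|Tset u v x l| <= #|lab HL @: Tset u v x l| * (6 * s).
  rewrite -sum1_card (partition_big_imset (lab HL)) /= -sum_nat_const.
  apply: leq_sum => w _; rewrite sum1dep_card.
  exact: (@fiber k u v x L HL H01 H02 H12 l s Hu Hv Hx w).
rewrite E mulnA -(mulnC 6) leq_pmul2r //.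
Qed.


Lemma sum_disj k (u v x : seq 'I_k) L (HL : 0 < L) (H01 : LCS u v <= L) (H02 : LCS u x <= L)
  (H12 : LCS v x <= L) :
  \sum_(l < k) #|lab HL @: Tset u v x l| <= L ^ 3.
Proof.
set V := fun l => lab HL @: Tset u v x l.
have -> : \sum_(l < k) #|V l| = \sum_(l < k) \sum_(w : 'I_L * 'I_L * 'I_L) (if w \in V l then 1 else 0).
  by apply: eq_bigr => l _; rewrite -sum1_card big_mkcond.
rewrite exchange_big /=.
have -> : L ^ 3 = \sum_(w : 'I_L * 'I_L * 'I_L) 1.
  by rewrite sum1_card card_prod card_prod !card_ord expnS expnS expn1 mulnA.
apply: leq_sum => w _.
case: (pickP (fun l => w \in V l)) => [l0 Hl0 | H0].
  rewrite (bigD1 l0) //= Hl0 big1 // => l Hl; case: ifP => // Hw; exfalso.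
  move: Hl0 Hw => /imsetP [t Ht ->] /imsetP [t' Ht' E].
  by move: Hl; rewrite (cross H01 H02 H12 Ht Ht' E) eqxx.
by rewrite big1 // => l _; rewrite H0.
Qed.

Theorem theorem11 (k : nat) (s : 'I_k -> nat) (pi : 'I_3 -> seq 'I_k) :
  (forall l, 0 < s l) ->
  (forall i, is_multiperm s (pi i)) ->
  exists i j : 'I_3, i < j /\
    \sum_(l < k) (s l) ^ 2 <= 6 * (LCS (pi i) (pi j)) ^ 3.
Proof.
move=> Hs Hm.
have Hc : forall i l, count_mem l (pi i) = s l.
  by move=> i l; move/forallP: (Hm i) => /(_ l) /eqP.
pose i0 := @Ordinal 3 0 isT. pose i1 := @Ordinal 3 1 isT. pose i2 := @Ordinal 3 2 isT.
case: (posnP k) => [k0 | kpos].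
  exists i0, i1; split => //; rewrite big1 // => l _.
  by have := ltn_ord l; lia.
set u := pi i0; set v := pi i1; set x := pi i2.
set L := maxn (LCS u v) (maxn (LCS u x) (LCS v x)).
have H01 : LCS u v <= L by rewrite leq_maxl.
have H02 : LCS u x <= L by rewrite /L leq_max leq_maxl orbT.
have H12 : LCS v x <= L by rewrite /L leq_max leq_maxr orbT.
pose l0 : 'I_k := Ordinal kpos.
have HL : 0 < L.
  apply: leq_trans H01.
  have -> : 1 = size [:: l0] by [].
  have mem : forall i, l0 \in pi i.
    move=> i; case: (boolP (l0 \in pi i)) => // /count_memPn.
    by rewrite Hc; have := Hs l0; lia.
  by apply: LCS_ge; rewrite sub1seq mem.
have key : \sum_(l < k) (s l) ^ 2 <= 6 * L ^ 3.
  apply: leq_trans (_ : \sum_(l < k) 6 * #|lab HL @: Tset u v x l| <= _).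
    apply: leq_sum => l _.
    exact: (per_letter HL H01 H02 H12 (Hs l) (Hc i0 l) (Hc i1 l) (Hc i2 l)).
  by rewrite -big_distrr /= leq_mul2l (sum_disj HL H01 H02 H12) orbT.
have : L = LCS u v \/ L = LCS u x \/ L = LCS v x.
  rewrite /L /maxn; case: ifP; case: ifP; tauto.
case => [E | [E | E]].
- by exists i0, i1; rewrite -E.
- by exists i0, i2; rewrite -E.
- by exists i1, i2; rewrite -E.
Qed.
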